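(* Let $G$ be an undirected graph with vertex set $V$ and integer edge weights. Choose $V_1\subseteq V$ uniformly at random (each vertex independently with probability $1/2$) and let $\overline V=V\setminus V_1$. Let $G'$ have vertex set $V\cup V_2$, where $V_2=\{u_2:u\in V_1\}$ consists of new copies, and edges: all edges of $G$; for every edge $\{u,v\}$ of $G$ with $u,v\in V_1$ an edge $\{u_2,v_2\}$ of the same weight; and for every edge $\{u,v\}$ of $G$ with $u\in V_1,v\in\overline V$ an edge $\{u_2,v\}$ of the same weight. Let $N(G')$ denote the number of vertices of $G'$ lying on a negative-weight triangle. If $G$ has no negative-weight triangle then $N(G')$ is even with probability $1$; if $G$ has a negative-weight triangle then $N(G')$ is odd with probability exactly $1/2$.
   Context: A negative-weight triangle is a set of three pairwise adjacent vertices whose three edge weights sum to a negative number. *)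

(* Defs.v *)
From HB Require Import structures.
From mathcomp Require Import all_boot all_order all_algebra.
Set Implicit Arguments. Unset Strict Implicit. Unset Printing Implicit Defensive.
Import Order.TTheory GRing.Theory Num.Theory.
Local Open Scope ring_scope.

Definition neg_triangle (S : finType) (adj : rel S) (wt : S -> S -> int)
  (x y z : S) : bool :=
  [&& adj x y, adj y z, adj x z & wt x y + wt y z + wt x z < 0].

Definition has_neg_triangle (S : finType) (adj : rel S) (wt : S -> S -> int) : bool :=
  [exists x, exists y, exists z, neg_triangle adj wt x y z].

Definition on_neg_triangle (S : finType) (adj : rel S) (wt : S -> S -> int) (x : S) : bool :=
  [exists y, exists z, neg_triangle adj wt x y z].

(* The graph G' built from G = (T, e, w) and V1 : {set T}.
   Its vertices live in T + T: inl u is the original vertex u, inr u is the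
   copy u_2 (a vertex of G' only when u \in V1). *)
Definition ext_vert (T : finType) (V1 : {set T}) (x : T + T) : bool :=
  match x with inl _ => true | inr u => u \in V1 end.

Definition ext_edge (T : finType) (e : rel T) (V1 : {set T}) : rel (T + T) :=
  fun x y =>
  match x, y with
  | inl u, inl v => e u v
  | inr u, inr v => [&& u \in V1, v \in V1 & e u v]
  | inr u, inl v => [&& u \in V1, v \notin V1 & e u v]
  | inl u, inr v => [&& v \in V1, u \notin V1 & e u v]
  end.

Definition strip (T : Type) (x : T + T) : T :=
  match x with inl u => u | inr u => u end.

Definition ext_weight (T : finType) (w : T -> T -> int) (x y : T + T) : int :=
  w (strip x) (strip y).

Definition Nneg (T : finType) (e : rel T) (w : T -> T -> int) (V1 : {set T}) : nat :=
  #|[set x : T + T | ext_vert V1 x && on_neg_triangle (ext_edge e V1) (ext_weight w) x]|.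

(* Main.v *)
Require Import Defs.
From HB Require Import structures.
From mathcomp Require Import all_boot all_order all_algebra.
Import Order.TTheory GRing.Theory Num.Theory.

Set Implicit Arguments. Unset Strict Implicit.
Section Aux.
Variables (T : finType) (e : rel T) (w : T -> T -> int) (V1 : {set T}).
Hypothesis e_irr : irreflexive e.

Lemma ext_strip x y : ext_edge e V1 x y -> e (strip x) (strip y).
Proof. by case: x => u; case: y => v //= /and3P []. Qed.

Lemma strip_tri x y z : neg_triangle (ext_edge e V1) (ext_weight w) x y z ->
  neg_triangle e w (strip x) (strip y) (strip z).
Proof.
by case/and4P=> /ext_strip h1 /ext_strip h2 /ext_strip h3 h4; apply/and4P.
Qed.

Definition lift (v : T) : T + T := if v \in V1 then inr v else inl v.

Lemma lift_edge a b : ext_edge e V1 (lift a) (lift b) = e a b.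
Proof.
rewrite /lift; case: (boolP (a \in V1)) => ha; case: (boolP (b \in V1)) => hb //=;
by rewrite ?ha ?hb.
Qed.

Lemma strip_lift a : strip (lift a) = a.
Proof. by rewrite /lift; case: (a \in V1). Qed.

Lemma on_inl u : on_neg_triangle (ext_edge e V1) (ext_weight w) (inl u) =
  on_neg_triangle e w u.
Proof.
apply/idP/idP.
- case/existsP=> y /existsP [z H]; apply/existsP; exists (strip y);
  apply/existsP; exists (strip z); exact (strip_tri H).
- case/existsP=> y /existsP [z H]; apply/existsP; exists (inl y);
  apply/existsP; exists (inl z); exact H.
Qed.

Lemma on_inr u : on_neg_triangle (ext_edge e V1) (ext_weight w) (inr u) =
  (u \in V1) && on_neg_triangle e w u.
Proof.
apply/idP/idP.
- case/existsP=> y /existsP [z H]; apply/andP; split.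
    by move: H => /and4P [] ; case: y => v /= /and3P [].
  apply/existsP; exists (strip y);
  apply/existsP; exists (strip z); exact (strip_tri H).
- case/andP=> hu /existsP [y /existsP [z H]]; apply/existsP; exists (lift y);
  apply/existsP; exists (lift z).
  have -> : inr u = lift u by rewrite /lift hu.
  move: H; rewrite /neg_triangle !lift_edge /ext_weight !strip_lift.
  done.
Qed.

Lemma inl_inj : injective (@inl T T). Proof. by move=> a b []. Qed.
Lemma inr_inj : injective (@inr T T). Proof. by move=> a b []. Qed.

Definition W := [set u | on_neg_triangle e w u].

Lemma Nneg_eq : Nneg e w V1 = (#|W| + #|W :&: V1|)%N.
Proof.
rewrite /Nneg.
have -> : [set x : T + T | ext_vert V1 x &&
            on_neg_triangle (ext_edge e V1) (ext_weight w) x]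
   = inl @: W :|: inr @: (W :&: V1).
  apply/setP => [[u|u]]; rewrite in_set in_setU.
  - rewrite (mem_imset _ _ inl_inj) on_inl.
    have -> : (inl u \in inr @: (W :&: V1)) = false.
      by apply/negbTE/imsetP => -[b _].
    by rewrite orbF in_set.
  - rewrite (mem_imset _ _ inr_inj) on_inr.
    have -> : (inr u \in inl @: W) = false.
      by apply/negbTE/imsetP => -[b _].
    by rewrite !in_set /=; case: (u \in V1); rewrite ?andbT ?andbF.
rewrite (cardsU (inl @: W)) (card_imset _ inl_inj) (card_imset _ inr_inj).
suff -> : inl @: W :&: inr @: (W :&: V1) = set0 by rewrite cards0 subn0.
apply/setP=> x; rewrite !inE; apply/negP=> /andP [/imsetP [a _ ->] /imsetP [b _]].
by [].
Qed.
End Aux.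
Unset Implicit Arguments. Set Strict Implicit.
(* Probabilities over the uniform choice of V1 : {set T} (2^|T| outcomes)
   are expressed as counts. *)
Theorem mainTheorem9 (T : finType) (e : rel T) (w : T -> T -> int)
  (e_sym : symmetric e) (e_irr : irreflexive e)
  (w_sym : forall u v, w u v = w v u) :
  (~~ has_neg_triangle e w ->
     #|[set V1 : {set T} | ~~ odd (Nneg e w V1)]| = #|{set T}|) /\
  (has_neg_triangle e w ->
     (2 * #|[set V1 : {set T} | odd (Nneg e w V1)]|)%N = #|{set T}|).
Proof.
split.
- move=> hn.
  have W0 : W e w = set0.
    apply/setP=> u; rewrite !inE; apply/negbTE; apply: contra hn => h.
    by apply/existsP; exists u.
  rewrite -cardsT; apply: eq_card => V.
  by rewrite !inE Nneg_eq W0 set0I cards0.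
- move=> /existsP [w0 hw0].
  have hW : w0 \in W e w by rewrite inE.
  pose f (V : {set T}) := if w0 \in V then V :\ w0 else w0 |: V.
  have fK : involutive f.
    move=> V; rewrite /f; case: (boolP (w0 \in V)) => h.
      by rewrite !inE eqxx /= setD1K.
    by rewrite setU11 setU1K.
  have fodd V : odd (Nneg e w (f V)) = ~~ odd (Nneg e w V).
    rewrite !Nneg_eq /f; case: (boolP (w0 \in V)) => h.
      rewrite [X in _ = ~~ odd (_ + X)](cardsD1 w0) in_setI hW h /=.
      have -> : (W e w :&: V) :\ w0 = W e w :&: (V :\ w0).
        by apply/setP=> x; rewrite !inE; case: (x != w0); case: (on_neg_triangle _ _ _).
      by rewrite !oddD /=; case: (odd _); case: (odd _).
    rewrite [X in odd (_ + X) = _](cardsD1 w0) in_setI hW setU11 /=.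
    have -> : (W e w :&: (w0 |: V)) :\ w0 = W e w :&: V.
      apply/setP=> x; rewrite !inE; case: (boolP (x == w0)) => // /eqP ->.
      by rewrite (negbTE h) andbF.
    by rewrite !oddD /=; case: (odd _); case: (odd _).
  set A := [set V1 : {set T} | odd (Nneg e w V1)].
  have AC : ~: A = f @^-1: A.
    by apply/setP=> V; rewrite !inE fodd.
  rewrite -(cardsC A) AC (card_preimset _ (inv_inj fK)).
  by rewrite mul2n addnn.
Qed.
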